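(* Let $m\ge1$ and let $\pi\in\mathfrak{S}_{3m}$ avoid $132$ and consist only of $3$-cycles. Index its $3$-cycles as having element sets $\{a_i<b_i<c_i\}$, $i=1,\dots,m$, with $b_1<b_2<\dots<b_m$, and let $D_\pi$ be its associated Dyck word. If the indices $j$ and $j+1$ lie in the same free block of $D_\pi$, then the $3$-cycles on $\{a_j,b_j,c_j\}$ and $\{a_{j+1},b_{j+1},c_{j+1}\}$ are of the same form. Furthermore, if these two $3$-cycles are of different forms, then $D_\pi$ has a hit at position $2j$.
   Context: A permutation avoids $132$ if there are no indices $i<j<k$ with $\pi_i<\pi_k<\pi_j$. A $3$-cycle on elements $a<b<c$ has form $(1,2,3)$ if it is $a\mapsto b\mapsto c\mapsto a$, and form $(1,3,2)$ if it is $a\mapsto c\mapsto b\mapsto a$. With $B=\{b_i\}$ and $C=\{c_i\}$, the associated Dyck word $D_\pi$ is the word of length $2m$ obtained by listing the elements of $B\cup C$ in increasing order and writing $0$ for each element of $B$ and $1$ for each element of $C$. For a Dyck word $D$ of semilength $m$ (a word with $m$ zeros and $m$ ones in which every prefix has at least as many zeros as ones): indices $i$ and $i+1$ ($1\le i<m$) are linked if the $i$-th and $(i+1)$-st $0$ of $D$ occupy adjacent positions and the $i$-th and $(i+1)$-st $1$ of $D$ occupy adjacent positions; the free blocks of $D$ are the maximal intervals of $\{1,\dots,m\}$ in which all consecutive indices are linked. $D$ has a hit at position $2j$ ($0\le j\le m$) if its prefix of length $2j$ contains exactly $j$ zeros and $j$ ones. *)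

(* Defs.v *)
From mathcomp Require Import all_boot all_order all_fingroup.
Set Implicit Arguments. Unset Strict Implicit. Unset Printing Implicit Defensive.

Section Defs.
Variable n : nat.
Implicit Types (s : {perm 'I_n}) (x : 'I_n).

Definition avoids132 s : Prop :=
  forall i j k : 'I_n, i < j -> j < k -> ~ (s i < s k < s j).

Definition only_3cycles s : Prop :=
  forall x, s x != x /\ s (s (s x)) = x.

Definition min3 (x y z : 'I_n) : 'I_n :=
  if x < y then (if x < z then x else z) else (if y < z then y else z).
Definition max3 (x y z : 'I_n) : 'I_n :=
  if x < y then (if y < z then z else y) else (if x < z then z else x).
Definition cyc_min s x := min3 x (s x) (s (s x)).
Definition cyc_max s x := max3 x (s x) (s (s x)).

Definition Bset s : {set 'I_n} := [set x | cyc_min s x < x < cyc_max s x].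
Definition Cset s : {set 'I_n} := [set x | x == cyc_max s x].

(* b_1 < b_2 < ... < b_m : the increasing enumeration of B (index j is entry j-1) *)
Definition Bsorted s : seq 'I_n := sort (fun x y : 'I_n => x <= y) (enum (Bset s)).

(* the 3-cycle containing b (a middle element) has form (1,2,3): a -> b -> c -> a *)
Definition form123 s b := s (cyc_min s b) == b.
(* ... form (1,3,2): a -> c -> b -> a *)
Definition form132 s b := s (cyc_min s b) == cyc_max s b.

(* Dyck word D_pi: elements of B u C in increasing order, false (=0) for B, true (=1) for C *)
Definition dyck_word s : seq bool :=
  [seq (x \in Cset s) | x <- sort (fun x y : 'I_n => x <= y) (enum (Bset s :|: Cset s))].
End Defs.

(* 0-based positions of the letters equal to b in D *)
Definition positions (b : bool) (D : seq bool) : seq nat :=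
  [seq p <- iota 0 (size D) | nth (~~ b) D p == b].

(* indices i and i+1 (1-based, 1 <= i < m) are linked: the i-th and (i+1)-st 0
   occupy adjacent positions, and so do the i-th and (i+1)-st 1 *)
Definition linked (D : seq bool) (i : nat) : bool :=
  (nth 0 (positions false D) i == (nth 0 (positions false D) i.-1).+1) &&
  (nth 0 (positions true D) i == (nth 0 (positions true D) i.-1).+1).

(* i and k lie in the same free block (maximal interval in which all consecutive
   indices are linked) iff every consecutive pair between them is linked *)
Definition same_free_block (D : seq bool) (i k : nat) : Prop :=
  forall l, minn i k <= l -> l < maxn i k -> linked D l.

Definition hit (D : seq bool) (j : nat) : Prop :=
  count (fun c => ~~ c) (take (2 * j) D) = j /\ count id (take (2 * j) D) = j.

Definition seq_at (T : Type) (s : seq T) (i : nat) : option T := nth None (map Some s) i.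

(* Main.v *)
Require Import Defs.
From mathcomp Require Import all_boot all_order all_fingroup.
From mathcomp Require Import zify.
Set Implicit Arguments. Unset Strict Implicit. Unset Printing Implicit Defensive.

Lemma val_min3 n (x y z : 'I_n) : val (min3 x y z) = minn x (minn y z).
Proof. rewrite /min3; repeat case: ltnP => ? /=; lia. Qed.
Lemma val_max3 n (x y z : 'I_n) : val (max3 x y z) = maxn x (maxn y z).
Proof. rewrite /max3; repeat case: ltnP => ? /=; lia. Qed.

Definition O n (s : {perm 'I_n}) (x y : 'I_n) := [|| y == x, y == s x | y == s (s x)].

Lemma min3_in n (x y z : 'I_n) : [|| min3 x y z == x, min3 x y z == y | min3 x y z == z].
Proof. rewrite /min3; repeat case: ifP => _; by rewrite eqxx ?orbT. Qed.
Lemma max3_in n (x y z : 'I_n) : [|| max3 x y z == x, max3 x y z == y | max3 x y z == z].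
Proof. rewrite /max3; repeat case: ifP => _; by rewrite eqxx ?orbT. Qed.

Section Orb.
Variable n : nat.
Variable s : {perm 'I_n}.
Hypothesis H3 : only_3cycles s.
Implicit Types x y : 'I_n.

Lemma s3 x : s (s (s x)) = x. Proof. by case: (H3 x). Qed.
Lemma sx_neq x : s x != x. Proof. by case: (H3 x). Qed.
Lemma ssx_neq x : s (s x) != x.
Proof. apply/eqP => E. have := s3 x. rewrite E => E2. by move: (sx_neq x); rewrite E2 eqxx. Qed.
Lemma ssx_neq_sx x : s (s x) != s x.
Proof. apply/eqP => /perm_inj E. by move: (sx_neq x); rewrite E eqxx. Qed.

Lemma distinct_vals x : [/\ val x != val (s x), val x != val (s (s x)) & val (s x) != val (s (s x))].
Proof.
split; rewrite val_eqE; [rewrite eq_sym; exact: sx_neq | rewrite eq_sym; exact: ssx_neq|rewrite eq_sym; exact: ssx_neq_sx].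
Qed.

Lemma cmin_s x : cyc_min s (s x) = cyc_min s x.
Proof. apply: val_inj; rewrite /cyc_min !val_min3 s3; lia. Qed.
Lemma cmax_s x : cyc_max s (s x) = cyc_max s x.
Proof. apply: val_inj; rewrite /cyc_max !val_max3 s3; lia. Qed.

Lemma O_inv x y : O s x y -> cyc_min s y = cyc_min s x /\ cyc_max s y = cyc_max s x.
Proof. by case/or3P => /eqP ->; rewrite ?cmin_s ?cmax_s. Qed.
Lemma O_sym x y : O s x y -> O s y x.
Proof. by case/or3P => /eqP ->; rewrite /O ?s3 eqxx ?orbT. Qed.
Lemma cmin_O x : O s x (cyc_min s x). Proof. exact: min3_in. Qed.
Lemma cmax_O x : O s x (cyc_max s x). Proof. exact: max3_in. Qed.

Lemma cmin_le x : cyc_min s x <= x. Proof. rewrite /cyc_min val_min3; lia. Qed.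
Lemma cmax_ge x : x <= cyc_max s x. Proof. rewrite /cyc_max val_max3; lia. Qed.
Lemma cmin_lt_cmax x : cyc_min s x < cyc_max s x.
Proof. case: (distinct_vals x) => /eqP /= ? /eqP /= ? /eqP /= ?. rewrite /cyc_min /cyc_max val_min3 val_max3; lia. Qed.

Lemma inB x : (x \in Bset s) = (cyc_min s x < x < cyc_max s x).
Proof. by rewrite inE. Qed.
Lemma inC x : (x \in Cset s) = (x == cyc_max s x).
Proof. by rewrite inE. Qed.
Lemma B_notC x : x \in Bset s -> x \notin Cset s.
Proof. rewrite inB inC => /andP [_ h]; apply/eqP => E; rewrite -E in h; lia. Qed.

Lemma cmax_C x : cyc_max s x \in Cset s.
Proof. by rewrite inC (proj2 (O_inv (cmax_O x))). Qed.


Lemma B_cases b : b \in Bset s ->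
 (s (cyc_min s b) = b /\ s b = cyc_max s b /\ s (cyc_max s b) = cyc_min s b) \/
 (s (cyc_min s b) = cyc_max s b /\ s (cyc_max s b) = b /\ s b = cyc_min s b).
Proof.
rewrite inB => /andP [h1 h2].
case/or3P: (cmin_O b) => /eqP Ea; case/or3P: (cmax_O b) => /eqP Ec;
  move: h1 h2; rewrite Ea Ec => h1 h2; try lia.
- by right; rewrite s3.
- by left; rewrite s3.
Qed.

Lemma form_xor b : b \in Bset s -> form132 s b = ~~ form123 s b.
Proof.
move=> hb; have := hb; rewrite inB => /andP [h1 h2].
rewrite /form132 /form123.
case: (B_cases hb) => [[-> _]|[-> _]].
- rewrite eqxx /=; case: eqP => // E; rewrite -E in h2; lia.
- rewrite eqxx /=; case: eqP => // E; rewrite E in h2; lia.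
Qed.

Lemma inB_neq x : cyc_min s x != x -> cyc_max s x != x -> x \in Bset s.
Proof.
move=> /eqP h1 /eqP h2; rewrite inB; have := cmin_le x; have := cmax_ge x.
have h1' : nat_of_ord (cyc_min s x) <> nat_of_ord x by move/val_inj.
have h2' : nat_of_ord (cyc_max s x) <> nat_of_ord x by move/val_inj.
move=> *; apply/andP; split; lia.
Qed.

Lemma B_middle c : c \in Cset s -> exists2 b, b \in Bset s & cyc_max s b = c.
Proof.
rewrite inC => /eqP Ec.
case: (distinct_vals c) => /eqP /= d1 /eqP /= d2 /eqP /= d3.
pose b := if cyc_min s c == s c then s (s c) else s c.
have Ob : O s c b by rewrite /b /O; case: ifP => _; rewrite eqxx ?orbT.
case: (O_inv Ob) => mb Mb.
exists b; last by rewrite Mb.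
apply: inB_neq; rewrite ?mb ?Mb -?Ec; rewrite /b; case: ifP => E.
- move/eqP: E => ->; apply/eqP => /(congr1 val) /=; lia.
- by rewrite E.
- apply/eqP => /(congr1 val) /=; lia.
- apply/eqP => /(congr1 val) /=; lia.
Qed.

Lemma cmax_inj : {in Bset s &, injective (cyc_max s)}.
Proof.
move=> b b' hb hb' E.
have Ob : O s (cyc_max s b) b by apply: O_sym; apply: cmax_O.
have Ob' : O s (cyc_max s b) b' by rewrite E; apply: O_sym; apply: cmax_O.
have Oa : O s (cyc_max s b) (cyc_min s b) by rewrite (proj1 (O_inv Ob)); apply: cmin_O.
have := hb; rewrite inB => /andP [h1 h2].
have := hb'; rewrite inB -E (proj1 (O_inv Ob')) -(proj1 (O_inv Ob)) => /andP [h1' h2'].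
move: Ob Ob' Oa h1 h2 h1' h2'.
set c := cyc_max s b; set a := cyc_min s b.
case: (distinct_vals c) => /eqP /= d1 /eqP /= d2 /eqP /= d3.
rewrite /O => /or3P [] /eqP -> /or3P [] /eqP -> /or3P [] /eqP ->; move=> *; try lia; by [].
Qed.

Lemma core b b' : avoids132 s -> b \in Bset s -> b' \in Bset s -> b < b' ->
  form123 s b != form123 s b' -> cyc_max s b < b'.
Proof.
move=> av hb hb' lt fne.
rewrite ltnNge; apply/negP => le.
have := hb; rewrite inB => /andP [h1 h2].
have := hb'; rewrite inB => /andP [h1' h2'].
have ne : b' != cyc_max s b.
  apply/eqP => E.
  have : O s b b' by rewrite E; apply: cmax_O.
  move/O_inv => [_ M]. rewrite M -E in h2'; lia.
have lt2 : b' < cyc_max s b by rewrite ltn_neqAle le andbT; exact: ne.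
rewrite /form123 in fne.
case: (B_cases hb) => [[E1 [E2 E3]]|[E1 [E2 E3]]];
case: (B_cases hb') => [[F1 [F2 F3]]|[F1 [F2 F3]]]; rewrite ?E1 ?F1 ?eqxx in fne.
- by [].
- (* b form123, b' form132 : triple (a, b, C') *)
  apply: (av (cyc_min s b) b (cyc_max s b')) => //; first lia.
  rewrite E1 E2 F2; apply/andP; split => //.
- (* b form132, b' form123 : triple (b, b', c) *)
  apply: (av b b' (cyc_max s b)) => //.
  rewrite E3 E2 F2; apply/andP; split; lia.
- have n1 : (cyc_max s b == b) = false by apply/negbTE; apply/eqP=> E; rewrite E in h2; lia.
  have n2 : (cyc_max s b' == b') = false by apply/negbTE; apply/eqP=> E; rewrite E in h2'; lia.
  by rewrite n1 n2 in fne.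
Qed.

End Orb.
Lemma count_enum_card (T : finType) (A : {set T}) (P : pred T) :
  count P (enum A) = #|[set x in A | P x]|.
Proof.
rewrite cardsE cardE /enum_mem size_filter count_filter.
by apply: eq_count => x /=; rewrite andbC.
Qed.

Lemma count_split (T : Type) (a b : pred T) (l : seq T) :
  count a l = count (fun x => a x && b x) l + count (fun x => a x && ~~ b x) l.
Proof. elim: l => //= x l ->; case: (a x); case: (b x) => /=; lia. Qed.

Section Sorted.
Variables (T : Type) (f : T -> nat).
Let R := fun x y => f x < f y.
Lemma R_trans : transitive R. Proof. move=> y x z; rewrite /R; apply: ltn_trans. Qed.

Lemma count_none v (L : seq T) : all (fun y => v <= f y) L -> count (fun x => f x < v) L = 0.
Proof. elim: L => //= x L IH /andP [h1 h2]; rewrite IH //; case: ltnP h1 => //; lia. Qed.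

Lemma nth_lt_count (x0 : T) (L : seq T) v i :
  sorted R L -> i < size L ->
  (f (nth x0 L i) < v) = (i < count (fun x => f x < v) L).
Proof.
elim: L i => [|x L IH] i //= hs hi.
have hall : all (R x) L := order_path_min R_trans hs.
have hsL : sorted R L := path_sorted hs.
case: (ltnP (f x) v) => hx.
- case: i hi => [|i] hi /=; first by rewrite add1n.
  by rewrite IH // add1n.
- have hn : count (fun x => f x < v) L = 0.
    by apply: count_none; apply: sub_all hall => y; rewrite /R; lia.
  rewrite hn /=.
  case: i hi => [|i] hi /=; first by apply/negbTE; rewrite -leqNgt.
  apply/negbTE; rewrite -leqNgt.
  have : f x < f (nth x0 L i) by move/all_nthP: hall; apply.
  lia.
Qed.

Lemma take_count_filter (L : seq T) v :
  sorted R L -> take (count (fun x => f x < v) L) L = filter (fun x => f x < v) L.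
Proof.
elim: L => //= x L IH hs.
have hall : all (R x) L := order_path_min R_trans hs.
have hsL : sorted R L := path_sorted hs.
case: (ltnP (f x) v) => hx /=.
- by rewrite add0n IH.
- have hn : count (fun x => f x < v) L = 0.
    by apply: count_none; apply: sub_all hall => y; rewrite /R; lia.
  rewrite hn add0n take0.
  have hs0 : size [seq y <- L | f y < v] = 0.
    by rewrite size_filter; apply: count_none; apply: sub_all hall => y; rewrite /R; lia.
  by case: [seq y <- L | f y < v] hs0.
Qed.
End Sorted.

Lemma sort_strict n (A : {set 'I_n}) :
  sorted (fun x y : 'I_n => x < y) (sort (fun x y : 'I_n => x <= y) (enum A)).
Proof.
have -> : (fun x y : 'I_n => x < y) = relpre val ltn by [].
rewrite -sorted_map ltn_sorted_uniq_leq (map_inj_uniq val_inj) sort_uniq enum_uniq /=.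
rewrite sorted_map; apply: sort_sorted => x y; exact: leq_total.
Qed.

Lemma sort_le n (A : {set 'I_n}) :
  sorted (fun x y : 'I_n => x <= y) (sort (fun x y : 'I_n => x <= y) (enum A)).
Proof. apply: sort_sorted => x y; exact: leq_total. Qed.

Lemma nth_lt_count_ord n (x0 : 'I_n) (L : seq 'I_n) (v : nat) i :
  sorted (fun x y : 'I_n => x < y) L -> i < size L ->
  (nth x0 L i < v) = (i < count (fun x : 'I_n => x < v) L).
Proof. exact: (@nth_lt_count _ val x0 L v i). Qed.

Lemma take_count_filter_ord n (L : seq 'I_n) (v : nat) :
  sorted (fun x y : 'I_n => x < y) L ->
  take (count (fun x : 'I_n => x < v) L) L = filter (fun x : 'I_n => x < v) L.
Proof. exact: (@take_count_filter _ val L v). Qed.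

Lemma seq_atP (T : Type) (L : seq T) i b : seq_at L i = Some b -> i < size L /\ nth b L i = b.
Proof.
rewrite /seq_at; case: (ltnP i (size L)) => h.
- by rewrite (nth_map b) // => [[]].
- by rewrite nth_default // size_map.
Qed.

Theorem lemma4p2 (m : nat) (s : {perm 'I_(3 * m)}) :
  1 <= m -> avoids132 s -> only_3cycles s ->
  forall (j : nat) (bj bj1 : 'I_(3 * m)),
    1 <= j -> j < m ->
    seq_at (Bsorted s) j.-1 = Some bj -> seq_at (Bsorted s) j = Some bj1 ->
    (same_free_block (dyck_word s) j j.+1 ->
       (form123 s bj && form123 s bj1) || (form132 s bj && form132 s bj1)) /\
    ((form123 s bj && form132 s bj1) || (form132 s bj && form123 s bj1) ->
       hit (dyck_word s) j).
Proof.
move=> hm av H3 j bj bj1 hj1 hjm Hbj Hbj1.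
set S := Bsorted s.
have [szj nthj] := seq_atP Hbj.
have [szj1 nthj1] := seq_atP Hbj1.
have nthj' : nth bj S j = bj1 by rewrite (set_nth_default bj1).
have memS : forall x, (x \in S) = (x \in Bset s) by move=> x; rewrite mem_sort mem_enum.
have bjB : bj \in Bset s by rewrite -memS -nthj mem_nth.
have bj1B : bj1 \in Bset s by rewrite -memS -nthj1 mem_nth.
have sS : sorted (fun x y : 'I_(3 * m) => x < y) S := sort_strict _.
have sSle : sorted (fun x y : 'I_(3 * m) => x <= y) S := sort_le _.
have leT_tr : transitive (fun x y : 'I_(3 * m) => x <= y) by move=> y x z; apply: leq_trans.
have leT_refl : reflexive (fun x y : 'I_(3 * m) => x <= y) by move=> x; apply: leqnn.
have lt_j : bj < bj1.
  have := @sorted_ltn_nth _ _ (@R_trans _ val) bj S sS j.-1 j.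
  rewrite !inE nthj nthj'; apply => //; lia.
have cS : count (fun x : 'I_(3 * m) => x < bj1) S = j.
  have e1 := @nth_lt_count_ord _ bj S bj1 j sS szj1.
  have e2 := @nth_lt_count_ord _ bj S bj1 j.-1 sS szj.
  rewrite nthj' ltnn in e1. rewrite nthj lt_j in e2.
  move: e1 e2 => /esym /negbT; rewrite -leqNgt => e1 /esym e2; lia.
have below : forall x, x \in Bset s -> x < bj1 -> x <= bj.
  move=> x hx hlt.
  have xin : x \in S by rewrite memS.
  have hk : index x S < size S by rewrite index_mem.
  have nk : nth bj S (index x S) = x by rewrite nth_index.
  have := @nth_lt_count_ord _ bj S bj1 (index x S) sS hk.
  rewrite nk hlt cS => /esym hkj.
  have := @sorted_leq_nth _ _ leT_tr leT_refl bj S sSle (index x S) j.-1.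
  rewrite !inE nk nthj; apply => //; lia.
have key : form123 s bj != form123 s bj1 -> hit (dyck_word s) j /\ ~ linked (dyck_word s) j.
  move=> diff.
  have Z : forall x, x \in Bset s -> x < bj1 -> cyc_max s x < bj1.
    move=> x hx hlt. have hle := below x hx hlt.
    case: (eqVneq x bj) => [->|ne]; first exact: core.
    have hlt2 : x < bj by rewrite ltn_neqAle hle andbT; exact: ne.
    case E: (form123 s x == form123 s bj).
    + by apply: core => //; rewrite (eqP E).
    + have ne2 : form123 s x != form123 s bj by rewrite E.
      have := core H3 av hx bjB hlt2 ne2. lia.
  have cB : #|[set x in Bset s | x < bj1]| = j.
    by rewrite -count_enum_card -cS /S /Bsorted count_sort.
  have cC : #|[set x in Cset s | x < bj1]| = j.
    have -> : [set x in Cset s | x < bj1] = cyc_max s @: [set x in Bset s | x < bj1].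
      apply/setP => y; rewrite inE; apply/andP/imsetP.
      - case=> hy hyt. case: (B_middle H3 hy) => b hb hby. exists b; last by rewrite hby.
        rewrite inE hb /=. have := cmax_ge s b; rewrite hby; lia.
      - case=> b; rewrite inE => /andP [hb hbt] ->. split; [exact: cmax_C | exact: Z].
    rewrite card_in_imset ?cB //. move=> x y /setIdP [hx _] /setIdP [hy _]; exact: (cmax_inj H3).
  set L := sort (fun x y : 'I_(3 * m) => x <= y) (enum (Bset s :|: Cset s)).
  have hD : dyck_word s = map (fun x => x \in Cset s) L by [].
  have sL : sorted (fun x y : 'I_(3 * m) => x < y) L := sort_strict _.
  have sLle : sorted (fun x y : 'I_(3 * m) => x <= y) L := sort_le _.
  have cL1 : count (fun x : 'I_(3 * m) => (x < bj1) && (x \notin Cset s)) L = j.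
    rewrite count_sort count_enum_card -cB. apply: eq_card => z. rewrite !inE -!inB -!inC.
    case hB: (z \in Bset s); case hC: (z \in Cset s) => //=; rewrite ?andbF ?andbT //.
    by have := B_notC hB; rewrite hC.
  have cL2 : count (fun x : 'I_(3 * m) => (x < bj1) && (x \in Cset s)) L = j.
    rewrite count_sort count_enum_card -cC. apply: eq_card => z. rewrite !inE -!inB -!inC.
    case hB: (z \in Bset s); case hC: (z \in Cset s) => //=; rewrite ?andbF ?andbT //.
  have cLt : count (fun x : 'I_(3 * m) => x < bj1) L = j + j.
    by rewrite (count_split _ (fun x => x \in Cset s)) cL1 cL2.
  have tk : take (j + j) L = filter (fun x : 'I_(3 * m) => x < bj1) L.
    by rewrite -cLt take_count_filter_ord.
  have hhit : hit (dyck_word s) j.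
    rewrite /hit hD -map_take; have -> : 2 * j = j + j by rewrite mul2n -addnn.
    rewrite tk !count_map !count_filter; split.
    + by rewrite -cL1; apply: eq_count => x /=; rewrite andbC.
    + by rewrite -cL2; apply: eq_count => x /=; rewrite andbC.
  split => // hl.
  set D := dyck_word s. set P := positions false D.
  have szL : j + j <= size L by rewrite -cLt count_size.
  have hsD : size D = size L by rewrite /D hD size_map.
  have cP : count (fun p => p < j + j) P = j.
    rewrite /P /positions count_filter.
    have szD : j + j <= size D by rewrite hsD.
    rewrite -(subnKC szD) iotaD count_cat add0n.
    have -> : count (predI (fun p => p < j + j) (fun p => nth (~~ false) D p == false))
               (iota (j + j) (size D - (j + j))) = 0.
      rewrite (@eq_in_count _ _ pred0) ?count_pred0 // => p.
      rewrite mem_iota => /andP [h1 _] /=. by rewrite ltnNge h1.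
    rewrite addn0 (@eq_in_count _ _ (fun p => nth true D p == false)); last first.
      by move=> p; rewrite mem_iota => /andP [_ h2] /=; rewrite add0n in h2; rewrite h2.
    rewrite -(count_map (nth true D) (fun c => c == false)) map_nth_iota0 //.
    case: hhit => h1 _. have e : 2 * j = j + j by rewrite mul2n -addnn. rewrite e in h1.
    apply: (etrans _ h1). by apply: eq_count => c; case: c.
  have sP : sorted ltn P by apply: sorted_filter; [exact: ltn_trans | exact: iota_ltn_sorted].
  move/andP: hl => [/eqP hl _]. rewrite -/D -/P in hl.
  case: (ltnP j (size P)) => hjP; last by rewrite (nth_default 0 hjP) in hl.
  have e1 := @nth_lt_count _ id 0 P (j + j) j sP hjP.
  rewrite /= cP ltnn in e1.
  have hj1P : j.-1 < size P by have := count_size (fun p => p < j + j) P; rewrite cP; clear -hj1; lia.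
  have e2 := @nth_lt_count _ id 0 P (j + j) j.-1 sP hj1P.
  rewrite /= cP in e2.
  have q : nth 0 P j.-1 = (j + j).-1.
    move: e1 e2 => /negbT; rewrite -leqNgt => e1 e2.
    have e3 : j.-1 < j by clear -hj1; lia.
    rewrite e3 in e2. clear -e1 e2 hl hj1; lia.
  have inP : (j + j).-1 \in P by rewrite -q mem_nth.
  move: inP; rewrite /P /positions mem_filter mem_iota => /andP [hq _].
  have hqL : (j + j).-1 < size L by clear -szL hj1; lia.
  rewrite /D hD (nth_map bj) // in hq.
  set y := nth bj L (j + j).-1 in hq.
  have yL : y \in L by apply: mem_nth.
  have yB : y \in Bset s.
    move: yL; rewrite mem_sort mem_enum in_setU => /orP [//| hC].
    by rewrite hC in hq.
  have yt : y < bj1.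
    have e := nth_lt_count_ord bj bj1 sL hqL. rewrite -/y cLt in e. rewrite e; clear -hj1; lia.
  have cy := Z y yB yt.
  have ylt : y < cyc_max s y by move: yB; rewrite inB => /andP[].
  have cL : cyc_max s y \in L by rewrite mem_sort mem_enum in_setU cmax_C ?orbT.
  have hk : index (cyc_max s y) L < size L by rewrite index_mem.
  have nk : nth bj L (index (cyc_max s y) L) = cyc_max s y by rewrite nth_index.
  have := nth_lt_count_ord bj bj1 sL hk; rewrite nk cy cLt => /esym hkj.
  have := @sorted_leq_nth _ _ leT_tr leT_refl bj L sLle (index (cyc_max s y) L) (j + j).-1.
  rewrite !inE nk -/y => /(_ hk hqL).
  have : index (cyc_max s y) L <= (j + j).-1 by clear -hkj hj1; lia.
  move=> h /(_ h). clear -ylt; lia.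
split.
- move=> hsb.
  have hl : linked (dyck_word s) j by apply: hsb; lia.
  case E: (form123 s bj == form123 s bj1).
  + rewrite (form_xor H3 bjB) (form_xor H3 bj1B) (eqP E). by case: (form123 s bj1).
  + exfalso. have ne2 : form123 s bj != form123 s bj1 by rewrite E.
    have [_ ] := key ne2. by apply.
- move=> hd. apply: (proj1 (key _)).
  rewrite (form_xor H3 bjB) (form_xor H3 bj1B) in hd.
  move: hd; by case: (form123 s bj); case: (form123 s bj1).
Qed.
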